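(* For every $\mathsf{pGCL}$ program $P\in\mathsf{PAST}$, with initial program state $\sigma_0=(P,\eta_0)$, there exist an ordinal $\mathbf{o}$ and functions $g:\mathcal{R}(\sigma_0)\to\mathbf{o}$ (the rank) and $k$ (the certification), assigning to each $\sigma\in\mathcal{R}(\sigma_0)$ a pair $k(\sigma)=(h_\sigma,\epsilon_\sigma)$ with $h_\sigma:\Sigma\to\mathbb{R}$, $\epsilon_\sigma\in\mathbb{R}$, such that: (1) for every $\sigma\in\mathcal{R}(\sigma_0)$, $g(\sigma)=0$ if and only if $\sigma$ is terminal; (2) for every non-terminal $\sigma\in\mathcal{R}(\sigma_0)$, letting $\mathcal{L}(\sigma)=\{\sigma'\in\mathcal{R}(\sigma)\mid g(\sigma')<g(\sigma)\}$, the pair $(h_\sigma,\epsilon_\sigma)$ is an RSM-map and, for every $\tau\in\Sigma$, $h_\sigma(\tau)=0$ if and only if $\tau\in\mathcal{L}(\sigma)\cup(\Sigma\setminus\mathcal{R}(\sigma))$.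
   Context: pGCL. Fix a countable set $\mathrm{Var}$ of variables taking rational values. Programs are generated by $P ::= \bot \mid v:=e \mid P;P \mid P\oplus_p P \mid P\,[\!]\,P \mid \mathtt{while}(b)\{P\}$ ($v\in\mathrm{Var}$, $e,p$ arithmetical expressions, $b$ boolean expression, $\bot$ the empty program; $\oplus_p$ probabilistic choice, $[\!]$ nondeterministic choice). A valuation is $\eta:\mathrm{Var}\to\mathbb{Q}$. A scheduler is a total function $f:\{L_n,R_n,L_p,R_p\}^*\to\{L_n,R_n\}$; $\mathbb{F}$ is the set of schedulers. An execution state is $(P,\eta,a,w)$ with $a\in\mathbb{Q}\cap(0,1]$, $w\in\{L_n,R_n,L_p,R_p\}^*$; a program state is $(P,\eta)$, $\Sigma$ is the set of program states; states with program $\bot$ are terminal. For $f\in\mathbb{F}$, $\to_f$ is the smallest relation with: $(v:=e,\eta,a,w)\to_f(\bot,\eta[v\mapsto[\![e]\!]_\eta],a,w)$; if $(P_1,\eta,a,w)\to_f(P_1',\eta',a',w')$ then $(P_1;P_2,\eta,a,w)\to_f(P_1';P_2,\eta',a',w')$; $(\bot;P_2,\eta,a,w)\to_f(P_2,\eta,a,w)$; $(P_1\oplus_pP_2,\eta,a,w)\to_f(P_2,\eta,a,wR_p)$ if $[\![p]\!]_\eta\le0$, $\to_f(P_1,\eta,a,wL_p)$ if $[\![p]\!]_\eta\ge1$, and if $0<[\![p]\!]_\eta<1$ both $\to_f(P_1,\eta,a[\![p]\!]_\eta,wL_p)$ and $\to_f(P_2,\eta,a(1-[\![p]\!]_\eta),wR_p)$;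 $(P_1[\!]P_2,\eta,a,w)\to_f(P_1,\eta,a,wL_n)$ if $f(w)=L_n$, $\to_f(P_2,\eta,a,wR_n)$ if $f(w)=R_n$; $(\mathtt{while}(b)\{P\},\eta,a,w)\to_f(P;\mathtt{while}(b)\{P\},\eta,a,w)$ if $b$ holds, else $\to_f(\bot,\eta,a,w)$. $\to_f^n$ ($n\ge1$) is the $n$-fold composition, $\to_f^*=\bigcup_{n\ge1}\to_f^n$. For $\sigma=(P,\eta)$ let $\sigma_e=(P,\eta,1,\varepsilon)$. The initial program state of $P$ is $(P,\eta_0)$, $\eta_0\equiv0$. $\mathrm{Prob}((P,\eta,a,w))=a$. $T_{\le k}(\sigma,f)$ is the set of terminal execution states $\tau$ with $\sigma_e\to_f^n\tau$ for some $n\le k$; $\mathrm{ExpRuntime}(\sigma,f)=\sum_{k\in\mathbb{N}}(1-\sum_{\tau\in T_{\le k}(\sigma,f)}\mathrm{Prob}(\tau))$. $\mathsf{PAST}$ is the set of programs $P$ with $\mathrm{ExpRuntime}((P,\eta_0),f)<\infty$ for all $f$. Reachable states: $\mathcal{R}(\sigma)=\{(P',\eta')\in\Sigma\mid\exists f\in\mathbb{F},\exists a',w':\sigma_e\to_f^*(P',\eta',a',w')\}$. RSM-map: a pair $(h,\epsilon)$ with $h:\Sigma\to[0,\infty)$ and real $\epsilon>0$ such that $h$ maps terminal states to $0$ and for every $\sigma=(P,\eta)$ with $h(\sigma)>0$: (i) if there is $\sigma'=(P',\eta')$ with $(P,\eta,1,\varepsilon)\to_f(P',\eta',1,\varepsilon)$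 for all $f$ (deterministic state), then $h(\sigma')+\epsilon\le h(\sigma)$; (ii) if $\sigma$ is nondeterministic with successors $\sigma_l=(P_l,\eta_l)$, $\sigma_r=(P_r,\eta_r)$ (for every $f$, $(P,\eta,1,\varepsilon)\to_f(P_l,\eta_l,1,L_n)$ or $\to_f(P_r,\eta_r,1,R_n)$), then $\max(h(\sigma_l),h(\sigma_r))+\epsilon\le h(\sigma)$; (iii) if $\sigma$ is probabilistic with probability value $p$ and successors $\sigma_l,\sigma_r$ (for all $f$, $(P,\eta,1,\varepsilon)\to_f(P_l,\eta_l,p,L_p)$ and $\to_f(P_r,\eta_r,1-p,R_p)$), then $p\,h(\sigma_l)+(1-p)h(\sigma_r)+\epsilon\le h(\sigma)$. *)

(* Defs.v *)
From HB Require Import structures.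
From mathcomp Require Import all_boot all_order all_algebra.
From mathcomp Require Import all_classical all_reals all_analysis.
From mathcomp Require Import Rstruct Rstruct_topology.
From Stdlib Require Rdefinitions.
Notation R := Rdefinitions.R.

Set Implicit Arguments.
Unset Strict Implicit.
Unset Printing Implicit Defensive.

Import Order.TTheory GRing.Theory Num.Theory.
Local Open Scope ring_scope.
Local Open Scope classical_set_scope.

Definition Var := nat.

Inductive aexp : Type :=
| AConst of rat
| AVar of Var
| AAdd of aexp & aexp
| ASub of aexp & aexp
| AMul of aexp & aexp.

Inductive bexp : Type :=
| BTrue
| BFalse
| BLe of aexp & aexp
| BLt of aexp & aexp
| BEq of aexp & aexp
| BNot of bexp
| BAnd of bexp & bexp
| BOr of bexp & bexp.

(** Programs: Skip is the empty program (bottom). *)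
Inductive prog : Type :=
| Skip
| Assign of Var & aexp
| Seq of prog & prog
| PChoice of prog & aexp & prog
| NChoice of prog & prog
| While of bexp & prog.

Definition valuation := Var -> rat.

Definition upd (eta : valuation) (v : Var) (q : rat) : valuation :=
  fun x => if x == v then q else eta x.

Fixpoint aeval (eta : valuation) (e : aexp) : rat :=
  match e with
  | AConst q => q
  | AVar v => eta v
  | AAdd e1 e2 => aeval eta e1 + aeval eta e2
  | ASub e1 e2 => aeval eta e1 - aeval eta e2
  | AMul e1 e2 => aeval eta e1 * aeval eta e2
  end.

Fixpoint beval (eta : valuation) (b : bexp) : bool :=
  match b with
  | BTrue => true
  | BFalse => false
  | BLe e1 e2 => aeval eta e1 <= aeval eta e2
  | BLt e1 e2 => aeval eta e1 < aeval eta e2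
  | BEq e1 e2 => aeval eta e1 == aeval eta e2
  | BNot b => ~~ beval eta b
  | BAnd b1 b2 => beval eta b1 && beval eta b2
  | BOr b1 b2 => beval eta b1 || beval eta b2
  end.

Inductive dir : Type := Ln | Rn | Lp | Rp.

Inductive ndir : Type := NL | NR.

Definition scheduler := seq dir -> ndir.

Record exstate : Type := ES {
  es_prog : prog;
  es_val : valuation;
  es_prob : rat;
  es_hist : seq dir }.

Definition pstate : Type := (prog * valuation)%type.

Definition pterminal (s : pstate) : Prop := s.1 = Skip.
Definition exterminal (t : exstate) : Prop := es_prog t = Skip.

Inductive step (f : scheduler) : exstate -> exstate -> Prop :=
| st_assign v e eta a w :
    step f (ES (Assign v e) eta a w) (ES Skip (upd eta v (aeval eta e)) a w)
| st_seq P1 P1' P2 eta a w eta' a' w' :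
    step f (ES P1 eta a w) (ES P1' eta' a' w') ->
    step f (ES (Seq P1 P2) eta a w) (ES (Seq P1' P2) eta' a' w')
| st_seq_skip P2 eta a w :
    step f (ES (Seq Skip P2) eta a w) (ES P2 eta a w)
| st_prob_le0 P1 p P2 eta a w :
    aeval eta p <= 0 ->
    step f (ES (PChoice P1 p P2) eta a w) (ES P2 eta a (rcons w Rp))
| st_prob_ge1 P1 p P2 eta a w :
    1 <= aeval eta p ->
    step f (ES (PChoice P1 p P2) eta a w) (ES P1 eta a (rcons w Lp))
| st_prob_L P1 p P2 eta a w :
    0 < aeval eta p < 1 ->
    step f (ES (PChoice P1 p P2) eta a w)
           (ES P1 eta (a * aeval eta p) (rcons w Lp))
| st_prob_R P1 p P2 eta a w :
    0 < aeval eta p < 1 ->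
    step f (ES (PChoice P1 p P2) eta a w)
           (ES P2 eta (a * (1 - aeval eta p)) (rcons w Rp))
| st_nd_L P1 P2 eta a w :
    f w = NL ->
    step f (ES (NChoice P1 P2) eta a w) (ES P1 eta a (rcons w Ln))
| st_nd_R P1 P2 eta a w :
    f w = NR ->
    step f (ES (NChoice P1 P2) eta a w) (ES P2 eta a (rcons w Rn))
| st_while_true b P eta a w :
    beval eta b ->
    step f (ES (While b P) eta a w) (ES (Seq P (While b P)) eta a w)
| st_while_false b P eta a w :
    ~~ beval eta b ->
    step f (ES (While b P) eta a w) (ES Skip eta a w).

(** n-fold composition of ->_f ([stepn f 0] is the identity; only n >= 1 is used). *)
Fixpoint stepn (f : scheduler) (n : nat) (s t : exstate) : Prop :=
  match n with
  | 0 => s = t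
  | n'.+1 => exists u, step f s u /\ stepn f n' u t
  end.

Definition steps (f : scheduler) (s t : exstate) : Prop :=
  exists n : nat, (1 <= n)%N /\ stepn f n s t.

Definition init (s : pstate) : exstate := ES s.1 s.2 1 [::].

Definition eta0 : valuation := fun _ => 0.

Definition Prob (t : exstate) : R := ratr (es_prob t).

HB.instance Definition _ := gen_eqMixin exstate.
HB.instance Definition _ := gen_choiceMixin exstate.

Definition T_le (s : pstate) (f : scheduler) (k : nat) : set exstate :=
  [set t | exterminal t /\ exists n : nat, (1 <= n <= k)%N /\ stepn f n (init s) t].

Definition ExpRuntime (s : pstate) (f : scheduler) : \bar R :=
  (\sum_(0 <= k <oo) (1 - \sum_(t \in T_le s f k) Prob t)%:E)%E.

Definition PAST (P : prog) : Prop :=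
  forall f : scheduler, (ExpRuntime (P, eta0) f < +oo)%E.

Definition Reach (s : pstate) : set pstate :=
  [set s' | exists (f : scheduler) (a : rat) (w : seq dir),
      steps f (init s) (ES s'.1 s'.2 a w)].

Definition RSM_map (h : pstate -> R) (eps : R) : Prop :=
  [/\ (forall s, 0 <= h s),
      0 < eps,
      (forall s, pterminal s -> h s = 0) &
      forall s, 0 < h s ->
        [/\ (* (i) deterministic states *)
            (forall s' : pstate,
               (forall f, step f (init s) (ES s'.1 s'.2 1 [::])) ->
               h s' + eps <= h s),
            (* (ii) nondeterministic states *)
            (forall sl sr : pstate,
               (forall f, step f (init s) (ES sl.1 sl.2 1 [:: Ln]) \/
                          step f (init s) (ES sr.1 sr.2 1 [:: Rn])) ->
               Num.max (h sl) (h sr) + eps <= h s) &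
            (* (iii) probabilistic states *)
            (forall (p : rat) (sl sr : pstate),
               (forall f, step f (init s) (ES sl.1 sl.2 p [:: Lp]) /\
                          step f (init s) (ES sr.1 sr.2 (1 - p) [:: Rp])) ->
               ratr p * h sl + (1 - ratr p) * h sr + eps <= h s)]].

(** An ordinal is represented (up to isomorphism) by a type with a strict
    well-order. *)
Definition well_order (O : Type) (lt : O -> O -> Prop) : Prop :=
  [/\ well_founded lt,
      (forall x y z, lt x y -> lt y z -> lt x z) &
      (forall x y, lt x y \/ x = y \/ lt y x)].

Definition is_zero (O : Type) (lt : O -> O -> Prop) (x : O) : Prop :=
  forall y, ~ lt y x.

(* Main.v *)
Require Import Defs.
From HB Require Import structures.
From mathcomp Require Import all_boot all_order all_algebra.
From mathcomp Require Import all_classical all_reals all_analysis.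
From mathcomp Require Import Rstruct Rstruct_topology.
From Stdlib Require Import Lia.
From mathcomp Require Import zify.
Import Order.TTheory GRing.Theory Num.Theory.
Local Open Scope ring_scope.
Local Open Scope classical_set_scope.
Set Implicit Arguments.
Unset Strict Implicit.
Unset Printing Implicit Defensive.
From mathcomp Require Import lra.

From HB Require Import structures.
From mathcomp Require Import all_boot all_order all_algebra.
From mathcomp Require Import all_classical all_reals all_analysis.
From mathcomp Require Import Rstruct Rstruct_topology.
Import Order.TTheory GRing.Theory Num.Theory.
Local Open Scope ring_scope.
Local Open Scope classical_set_scope.
Set Implicit Arguments.
Unset Strict Implicit.
Unset Printing Implicit Defensive.

Inductive trans : Type :=
| TTerm
| TDet of pstate
| TDeg of pstate & dir
| TND of pstate & pstate
| TPr of rat & pstate & pstate.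

Definition seqw (Q : prog) (u : pstate) : pstate := (Seq u.1 Q, u.2).

Definition wrap (Q : prog) (t : trans) : trans :=
  match t with
  | TTerm => TTerm
  | TDet u => TDet (seqw Q u)
  | TDeg u d => TDeg (seqw Q u) d
  | TND l r => TND (seqw Q l) (seqw Q r)
  | TPr p l r => TPr p (seqw Q l) (seqw Q r)
  end.

Fixpoint nexts (P : prog) (eta : valuation) : trans :=
  match P with
  | Skip => TTerm
  | Assign v e => TDet (Skip, upd eta v (aeval eta e))
  | Seq P1 P2 => match P1 with
                 | Skip => TDet (P2, eta)
                 | _ => wrap P2 (nexts P1 eta)
                 end
  | PChoice P1 p P2 =>
      if aeval eta p <= 0 then TDeg (P2, eta) Rp
      else if 1 <= aeval eta p then TDeg (P1, eta) Lp
      else TPr (aeval eta p) (P1, eta) (P2, eta)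
  | NChoice P1 P2 => TND (P1, eta) (P2, eta)
  | While b Q => if beval eta b then TDet (Seq Q (While b Q), eta)
                 else TDet (Skip, eta)
  end.

Definition tstep (f : scheduler) (x y : exstate) : Prop :=
  match nexts (es_prog x) (es_val x) with
  | TTerm => False
  | TDet u => y = ES u.1 u.2 (es_prob x) (es_hist x)
  | TDeg u d => y = ES u.1 u.2 (es_prob x) (rcons (es_hist x) d)
  | TND l r => match f (es_hist x) with
               | NL => y = ES l.1 l.2 (es_prob x) (rcons (es_hist x) Ln)
               | NR => y = ES r.1 r.2 (es_prob x) (rcons (es_hist x) Rn)
               end
  | TPr p l r => y = ES l.1 l.2 (es_prob x * p) (rcons (es_hist x) Lp) \/
                 y = ES r.1 r.2 (es_prob x * (1 - p)) (rcons (es_hist x) Rp)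
  end.

Lemma nexts_seq P1 P2 eta : P1 <> Skip -> nexts (Seq P1 P2) eta = wrap P2 (nexts P1 eta).
Proof. by case: P1. Qed.

Lemma step_tstep f x y : step f x y -> tstep f x y.
Proof.
elim=> //=.
- move=> P1 P1' P2 eta a w eta' a' w' H IH.
  have HP1 : P1 <> Skip by move=> E; move: IH; rewrite E /tstep /=.
  move: (nexts_seq P2 eta HP1) IH; rewrite /tstep /= => ->.
  case: (nexts P1 eta) => //=.
  + by move=> u [-> -> -> ->].
  + by move=> u d [-> -> -> ->].
  + by move=> l r; case: (f w) => -[-> -> -> ->].
  + by move=> p l r [[-> -> -> ->]|[-> -> -> ->]]; [left|right].
- move=> P1 p P2 eta a w H; rewrite /tstep /= H //.
- move=> P1 p P2 eta a w H; rewrite /tstep /=.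
  case: ifP => [H0|_] //; first by have := le_trans H H0; rewrite ler10.
  by rewrite H.
- move=> P1 p P2 eta a w /andP[H0 H1]; rewrite /tstep /=.
  rewrite leNgt H0 /= leNgt H1 /=; by left.
- move=> P1 p P2 eta a w /andP[H0 H1]; rewrite /tstep /=.
  rewrite leNgt H0 /= leNgt H1 /=; by right.
- by move=> P1 P2 eta a w H; rewrite /tstep /= H.
- by move=> P1 P2 eta a w H; rewrite /tstep /= H.
- by move=> b P eta a w H; rewrite /tstep /= H.
- by move=> b P eta a w H; rewrite /tstep /= (negbTE H).
Qed.

Lemma tstep_step f x y : tstep f x y -> step f x y.
Proof.
case: x => P eta a w; rewrite /tstep /=.
elim: P eta a w y => //=.
- move=> v e eta a w y ->; exact: st_assign.
- move=> P1 IH1 P2 _ eta a w y.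
  have [E|HP1] : P1 = Skip \/ P1 <> Skip by destruct P1; [left|right..].
    by rewrite E => ->; exact: st_seq_skip.
  move: (nexts_seq P2 eta HP1) (IH1 eta a w) => /= ->.
  case: (nexts P1 eta) => //=.
  - by move=> u IH ->; apply: st_seq; apply: IH.
  - by move=> u d IH ->; apply: st_seq; apply: IH.
  - by move=> l r; case: (f w) => IH ->; apply: st_seq; apply: IH.
  - by move=> p l r IH [->|->]; apply: st_seq; apply: IH; [left|right].
- move=> P1 _ p P2 _ eta a w y.
  case: ifP => H0; first by move=> ->; exact: st_prob_le0.
  case: ifP => H1; first by move=> ->; exact: st_prob_ge1.
  have Hp : 0 < aeval eta p < 1 by rewrite !ltNge H0 H1.
  by move=> [->|->]; [exact: st_prob_L | exact: st_prob_R].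
- move=> P1 _ P2 _ eta a w y.
  case E: (f w) => ->; [exact: st_nd_L | exact: st_nd_R].
- move=> b P _ eta a w y.
  case: ifP => H ->; [exact: st_while_true | apply: st_while_false; by rewrite H].
Qed.

Lemma step_iff f x y : step f x y <-> tstep f x y.
Proof. split; [exact: step_tstep | exact: tstep_step]. Qed.


Definition pre (w v : seq dir) : Prop := exists u, v = w ++ u.

Lemma pre_refl w : pre w w.
Proof. by exists [::]; rewrite cats0. Qed.

Lemma pre_trans a b c : pre a b -> pre b c -> pre a c.
Proof. by move=> [u ->] [u' ->]; exists (u ++ u'); rewrite catA. Qed.

Lemma pre_rcons w d : pre w (rcons w d).
Proof. by exists [:: d]; rewrite cats1. Qed.

Lemma pre_size w v : pre w v -> (size w <= size v)%N.
Proof. by move=> [u ->]; rewrite size_cat leq_addr. Qed.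

Lemma pre_antisym w v : pre w v -> pre v w -> w = v.
Proof.
move=> [u Hu] [u' Hu'].
have : size u = 0%N.
  by move: (congr1 size Hu) (congr1 size Hu'); rewrite !size_cat; lia.
by case: u Hu => // ->; rewrite cats0.
Qed.

Lemma pre_cmp a b c : pre a c -> pre b c -> pre a b \/ pre b a.
Proof.
elim: a b c => [|x a IH] b c; first by left; exists b.
case: b => [|y b]; first by right; exists (x :: a).
move=> [u ->] [u' /= [<- E]].
have [H|H] := IH b (a ++ u) (ex_intro _ u erefl) (ex_intro _ u' E).
- by left; case: H => v ->; exists v.
- by right; case: H => v ->; exists v.
Qed.

Lemma pre_rcons_not w d : ~ pre (rcons w d) w.
Proof. by move=> /pre_size; rewrite size_rcons ltnn. Qed.

Lemma pre_same_size a b c : pre a c -> pre b c -> size a = size b -> a = b.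
Proof.
move=> Ha Hb Hs; have [H|H] := pre_cmp Ha Hb.
- apply: pre_antisym => //; case: H Hs => u ->; rewrite size_cat.
  case: u => [|x u] /=; first by rewrite cats0 => _; exact: pre_refl.
  lia.
- apply: esym; apply: pre_antisym => //; case: H Hs => u ->; rewrite size_cat.
  case: u => [|x u] /=; first by rewrite cats0 => _; exact: pre_refl.
  lia.
Qed.

Lemma pre_rcons_diff w d1 d2 v : d1 <> d2 -> pre (rcons w d1) v -> pre (rcons w d2) v -> False.
Proof.
move=> Hd H1 H2; have := pre_same_size H1 H2; rewrite !size_rcons => /(_ erefl).
by move=> /rcons_inj [].
Qed.

Definition isND (x : exstate) : Prop :=
  match nexts (es_prog x) (es_val x) with TND _ _ => True | _ => False end.
Definition isDet (x : exstate) : Prop :=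
  match nexts (es_prog x) (es_val x) with TDet _ => True | _ => False end.

Lemma step_pre f x y : step f x y -> pre (es_hist x) (es_hist y).
Proof.
move/step_iff; rewrite /tstep; case: (nexts _ _) => //.
- by move=> u ->; exact: pre_refl.
- by move=> u d ->; exact: pre_rcons.
- by move=> l r; case: (f _) => ->; exact: pre_rcons.
- by move=> p l r [->|->]; exact: pre_rcons.
Qed.

Lemma step_same_hist f x y : step f x y -> pre (es_hist y) (es_hist x) -> isDet x.
Proof.
move/step_iff; rewrite /tstep /isDet; case: (nexts _ _) => //.
- by move=> u d -> /= /pre_rcons_not.
- by move=> l r; case: (f _) => -> /= /pre_rcons_not.
- by move=> p l r [->|->] /= /pre_rcons_not.
Qed.

Lemma step_agree f f' x y : step f x y ->
  (isND x -> f (es_hist x) = f' (es_hist x)) -> step f' x y.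
Proof.
move/step_iff => H E; apply/step_iff; move: H E; rewrite /tstep /isND.
case: (nexts _ _) => // l r H E; by rewrite -E.
Qed.

Lemma step_ND_hist f x y : step f x y -> isND x -> ~ pre (es_hist y) (es_hist x).
Proof.
move=> H Hn Hp; have := step_same_hist H Hp; move: Hn; rewrite /isND /isDet.
by case: (nexts _ _).
Qed.

Lemma step_uniq f x y y' v : step f x y -> step f x y' ->
  pre (es_hist y) v -> pre (es_hist y') v -> y = y'.
Proof.
move=> /step_iff H /step_iff H'; move: H H'; rewrite /tstep.
case: (nexts _ _) => //.
- by move=> u -> ->.
- by move=> u d -> ->.
- by move=> l r; case: (f _) => -> ->.
- move=> p l r [->|->] [->|->] //= H1 H2; exfalso; exact: (pre_rcons_diff _ H1 H2).
Qed.

Lemma stepn_add f n m x y :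
  stepn f (n + m) x y <-> exists z, stepn f n x z /\ stepn f m z y.
Proof.
elim: n x => [|n IH] x /=; first by split; [move=> H; exists x | move=> [z [-> H]]].
split.
- move=> [u [H1 H2]]; have [z [Hz1 Hz2]] := (IH u).1 H2.
  by exists z; split => //; exists u.
- move=> [z [[u [H1 H2]] H3]]; exists u; split => //; apply/(IH u).2; by exists z.
Qed.

Lemma stepn_pre f n x y : stepn f n x y -> pre (es_hist x) (es_hist y).
Proof.
elim: n x => [|n IH] x /=; first by move=> ->; exact: pre_refl.
move=> [u [H1 H2]]; exact: pre_trans (step_pre H1) (IH _ H2).
Qed.

Lemma stepn_agree f f' n x y : stepn f n x y ->
  (forall v, ~ pre (es_hist y) v -> f v = f' v) -> stepn f' n x y.
Proof.
elim: n x => [|n IH] x /=; first by [].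
move=> [u [H1 H2]] E; exists u; split; last exact: IH.
apply: (step_agree H1) => Hn; apply: E => Hp.
apply: (step_ND_hist H1 Hn); exact: pre_trans (stepn_pre H2) Hp.
Qed.

Lemma stepn_uniq f n x y y' v : stepn f n x y -> stepn f n x y' ->
  pre (es_hist y) v -> pre (es_hist y') v -> y = y'.
Proof.
elim: n x => [|n IH] x /=; first by move=> <- <-.
move=> [u [H1 H2]] [u' [H1' H2']] Hv Hv'.
have Eu : u = u'.
  apply: (step_uniq H1 H1'); [exact: pre_trans (stepn_pre H2) Hv|exact: pre_trans (stepn_pre H2') Hv'].
by subst u'; exact: IH H2 H2' Hv Hv'.
Qed.

Lemma stepn_lateDet f i k x y z : stepn f i x y -> stepn f k x z -> (i < k)%N ->
  pre (es_hist z) (es_hist y) -> isDet y.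
Proof.
move=> Hy Hz Hik Hp.
have Ek : k = (i + (k - i))%N by lia.
rewrite Ek in Hz; have [y' [Hy' Hz']] := (stepn_add _ _ _ _ _).1 Hz.
have E : y = y'.
  apply: (stepn_uniq Hy Hy' (pre_refl _)); exact: pre_trans (stepn_pre Hz') Hp.
subst y'.
have [m Em] : exists m, (k - i = m.+1)%N by exists (k - i).-1; lia.
rewrite Em /= in Hz'; case: Hz' => [u [H1 H2]].
apply: (step_same_hist H1); exact: pre_trans (stepn_pre H2) Hp.
Qed.

Definition scl (c : rat) (x : exstate) : exstate :=
  ES (es_prog x) (es_val x) (c * es_prob x) (es_hist x).

Lemma step_scl f c x y : step f x y -> step f (scl c x) (scl c y).
Proof.
move/step_iff => H; apply/step_iff; move: H; rewrite /tstep /scl /=.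
case: (nexts _ _) => //.
- by move=> u ->.
- by move=> u d ->.
- by move=> l r; case: (f _) => ->.
- by move=> p l r [->|->]; [left|right]; rewrite /= mulrA.
Qed.

Lemma stepn_scl f c n x y : stepn f n x y -> stepn f n (scl c x) (scl c y).
Proof.
elim: n x => [|n IH] x /=; first by move=> ->.
move=> [u [H1 H2]]; exists (scl c u); split; [exact: step_scl|exact: IH].
Qed.

Definition hsh (h : seq dir) (x : exstate) : exstate :=
  ES (es_prog x) (es_val x) (es_prob x) (h ++ es_hist x).

Lemma step_hsh f g h x y : (forall v, g (h ++ v) = f v) -> step f x y -> step g (hsh h x) (hsh h y).
Proof.
move=> Eg /step_iff H; apply/step_iff; move: H; rewrite /tstep /hsh /=.
case: (nexts _ _) => //.
- by move=> u ->.
- by move=> u d ->; rewrite /= rcons_cat.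
- by move=> l r; rewrite Eg; case: (f _) => ->; rewrite /= rcons_cat.
- by move=> p l r [->|->]; [left|right]; rewrite /= rcons_cat.
Qed.

Lemma stepn_hsh f g h n x y : (forall v, g (h ++ v) = f v) ->
  stepn f n x y -> stepn g n (hsh h x) (hsh h y).
Proof.
move=> Eg; elim: n x => [|n IH] x /=; first by move=> ->.
move=> [u [H1 H2]]; exists (hsh h u); split; [exact: step_hsh|exact: IH].
Qed.

Lemma nexts_Pr P eta p l r : nexts P eta = TPr p l r -> 0 < p < 1.
Proof.
elim: P eta p l r.
- by [].
- by [].
- move=> P1 IH1 P2 _ eta p l r.
  have [E|HP1] : P1 = Skip \/ P1 <> Skip by destruct P1; [left|right..].
    by rewrite E.
  rewrite nexts_seq //; move: (IH1 eta); case: (nexts P1 eta) => //= p' l' r' H [<- _ _].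
  exact: H.
- move=> P1 _ q P2 _ eta p l r /=.
  case: ifP => // H0; case: ifP => // H1 [<- _ _]; by rewrite !ltNge H0 H1.
- by [].
- by move=> b Q _ eta p l r /=; case: ifP.
Qed.

Lemma step_pos f x y : 0 < es_prob x -> step f x y -> 0 < es_prob y.
Proof.
move=> Hx /step_iff; rewrite /tstep.
case E: (nexts _ _) => //.
- by move=> ->.
- by move=> ->.
- by case: (f _) => ->.
- move: (nexts_Pr E) => /andP[H0 H1] [->|->] /=; apply: mulr_gt0 => //.
  by rewrite subr_gt0.
Qed.

Lemma stepn_pos f n x y : 0 < es_prob x -> stepn f n x y -> 0 < es_prob y.
Proof.
elim: n x => [|n IH] x /=; first by move=> ? <-.
move=> Hx [u [H1 H2]]; exact: IH (step_pos Hx H1) H2.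
Qed.

Definition succs (f : scheduler) (x : exstate) : seq exstate :=
  match nexts (es_prog x) (es_val x) with
  | TTerm => [::]
  | TDet u => [:: ES u.1 u.2 (es_prob x) (es_hist x)]
  | TDeg u d => [:: ES u.1 u.2 (es_prob x) (rcons (es_hist x) d)]
  | TND l r => [:: match f (es_hist x) with
                   | NL => ES l.1 l.2 (es_prob x) (rcons (es_hist x) Ln)
                   | NR => ES r.1 r.2 (es_prob x) (rcons (es_hist x) Rn)
                   end]
  | TPr p l r => [:: ES l.1 l.2 (es_prob x * p) (rcons (es_hist x) Lp);
                     ES r.1 r.2 (es_prob x * (1 - p)) (rcons (es_hist x) Rp)]
  end.

Lemma step_succs f x y : step f x y <-> List.In y (succs f x).
Proof.
rewrite step_iff /tstep /succs; case: (nexts _ _) => /=.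
- by [].
- by move=> u; split; [move=> ->; left|case=> // <-].
- by move=> u d; split; [move=> ->; left|case=> // <-].
- by move=> l r; case: (f _); split; [move=> ->; left|case=> // <-|move=> ->; left|case=> // <-].
- move=> p l r; split; first by case=> ->; [left|right; left].
  by case=> [<-|[<-|[]]]; [left|right].
Qed.

Definition pst (x : exstate) : pstate := (es_prog x, es_val x).

Definition isTerm (x : pstate) : bool :=
  match nexts x.1 x.2 with TTerm => true | _ => false end.

Lemma nexts_term P eta : nexts P eta = TTerm -> P = Skip.
Proof.
elim: P eta => //=.
- move=> P1 IH1 P2 _ eta.
  have [E|HP1] : P1 = Skip \/ P1 <> Skip by destruct P1; [left|right..].
    by rewrite E.
  move: (nexts_seq P2 eta HP1) (IH1 eta) => /= ->; case: (nexts P1 eta) => //= H.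
  by have := H erefl.
- by move=> P1 _ q P2 _ eta; case: ifP => //; case: ifP.
- by move=> b Q _ eta; case: ifP.
Qed.

Lemma isTermE x : isTerm x = true <-> x.1 = Skip.
Proof.
rewrite /isTerm; split; last by case: x => P e /= ->.
by case E: (nexts _ _) => // _; exact: nexts_term E.
Qed.

Fixpoint ev (Z : set pstate) (f : scheduler) (w : seq dir) (n : nat) (x : pstate) : R :=
  match n with
  | 0 => 0
  | n'.+1 => if (x \in Z) || isTerm x then 0 else
      1 + \sum_(z <- succs f (ES x.1 x.2 1 w))
            ratr (es_prob z) * ev Z f (es_hist z) n' (pst z)
  end.

Lemma succs_pos f x z : 0 < es_prob x -> List.In z (succs f x) -> 0 < es_prob z.
Proof. by move=> H /step_succs; exact: step_pos. Qed.

Lemma sum_weights f x : isTerm (pst x) = false ->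
  \sum_(z <- succs f x) ratr (es_prob z) = ratr (es_prob x) :> R.
Proof.
rewrite /isTerm /succs /pst /=; case: (nexts _ _) => //=.
- by move=> u _; rewrite big_seq1.
- by move=> u d _; rewrite big_seq1.
- by move=> l r _; case: (f _); rewrite big_seq1.
- move=> p l r _; rewrite big_cons big_seq1 !rmorphM rmorphB rmorph1 /=.
  by rewrite -mulrDr addrC subrK mulr1.
Qed.

Lemma sum_ge0l (T : Type) (s : seq T) (F : T -> R) :
  (forall y, List.In y s -> 0 <= F y) -> 0 <= \sum_(y <- s) F y.
Proof.
elim: s => [|a s IH] H; first by rewrite big_nil.
rewrite big_cons addr_ge0 //; [apply: H; left | apply: IH => y Hy; apply: H; right] => //.
Qed.

Lemma sum_ge_one (T : Type) (s : seq T) (F : T -> R) z :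
  (forall y, List.In y s -> 0 <= F y) -> List.In z s -> F z <= \sum_(y <- s) F y.
Proof.
elim: s => [|a s IH] //= H [->|Hz]; rewrite big_cons.
- by rewrite lerDl; apply: sum_ge0l => y Hy; apply: H; right.
- rewrite -[F z]add0r lerD //; first by apply: H; left.
  by apply: IH => // y Hy; apply: H; right.
Qed.

Lemma ler_sum_In (T : Type) (s : seq T) (F G : T -> R) :
  (forall y, List.In y s -> F y <= G y) -> \sum_(y <- s) F y <= \sum_(y <- s) G y.
Proof.
elim: s => [|a s IH] H; first by rewrite !big_nil.
rewrite !big_cons lerD //; [apply: H; left | apply: IH => y Hy; apply: H; right] => //.
Qed.

Lemma eq_sum_In (T : Type) (s : seq T) (F G : T -> R) :
  (forall y, List.In y s -> F y = G y) -> \sum_(y <- s) F y = \sum_(y <- s) G y.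
Proof.
elim: s => [|a s IH] H; first by rewrite !big_nil.
rewrite !big_cons H; last by left.
by rewrite IH // => y Hy; apply: H; right.
Qed.

Lemma wpos f x w z : List.In z (succs f (ES x.1 x.2 1 w)) -> 0 <= ratr (es_prob z) :> R.
Proof. by move=> H; rewrite ler0q; apply: ltW; apply: (succs_pos _ H). Qed.

Lemma ev_ge0 Z f w n x : 0 <= ev Z f w n x.
Proof.
elim: n w x => [|n IH] w x //=; case: ifP => // _.
apply: addr_ge0 => //; apply: sum_ge0l => z Hz; apply: mulr_ge0 => //.
exact: wpos Hz.
Qed.

Lemma ev_mono Z f w n x : ev Z f w n x <= ev Z f w n.+1 x.
Proof.
elim: n w x => [|n IH] w x; first exact: ev_ge0.
rewrite [ev _ _ _ n.+1 _]/= [ev _ _ _ n.+2 _]/=; case: ifP => // _.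
rewrite lerD2l; apply: ler_sum_In => z Hz; apply: ler_wpM2l; [exact: wpos Hz|exact: IH].
Qed.

Lemma ev_mono_le Z f w n m x : (n <= m)%N -> ev Z f w n x <= ev Z f w m x.
Proof.
move=> /subnK <-; elim: (m - n)%N => [|k IH] //=.
exact: le_trans IH (ev_mono _ _ _ _ _).
Qed.

Lemma ev_inc1 Z f w n x : ev Z f w n.+1 x <= ev Z f w n x + 1.
Proof.
elim: n w x => [|n IH] w x.
  rewrite /=; case: ifP => _; first by rewrite add0r ler01.
  rewrite add0r -[X in _ <= X]addr0 lerD2l.
  by under eq_bigr do rewrite mulr0; rewrite big1.
rewrite [ev _ _ _ n.+1 _]/= [ev _ _ _ n.+2 _]/=; case: ifP => [_|Hc]; first by rewrite add0r ler01.
rewrite -addrA lerD2l.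
have Ht : isTerm (pst (ES x.1 x.2 1 w)) = false by move: Hc; rewrite /pst /=; case: x => ? ? /=; case: (isTerm _); rewrite ?orbT.
apply: (@le_trans _ _ (\sum_(z <- succs f (ES x.1 x.2 1 w)) ratr (es_prob z) * (ev Z f (es_hist z) n (pst z) + 1))).
  by apply: ler_sum_In => z Hz; apply: ler_wpM2l; [exact: wpos Hz|exact: IH].
rewrite (@eq_sum_In _ _ _ (fun z => ratr (es_prob z) * ev Z f (es_hist z) n (pst z) + ratr (es_prob z))); last first.
  by move=> z _; rewrite mulrDr mulr1.
by rewrite big_split /= sum_weights // rmorph1.
Qed.

Lemma ev_anti (Z Z' : set pstate) f w n x : (forall y, Z y -> Z' y) -> ev Z' f w n x <= ev Z f w n x.
Proof.
move=> HZ; elim: n w x => [|n IH] w x //=.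
case: ifP => [_|Hc]; first by case: ifP => // _; apply: addr_ge0 => //;
  apply: sum_ge0l => z Hz; apply: mulr_ge0; [exact: wpos Hz|exact: ev_ge0].
have HxZ : (x \in Z) = false.
  apply/negP => Hx; move: Hc; have -> : x \in Z' by move: Hx; rewrite !inE; exact: HZ.
  by [].
have HT : isTerm x = false by move: Hc; case: (isTerm x); rewrite ?orbT.
rewrite HxZ HT /=.
rewrite lerD2l; apply: ler_sum_In => z Hz; apply: ler_wpM2l; [exact: wpos Hz|exact: IH].
Qed.

Lemma succs_scl f c x : succs f (scl c x) = map (scl c) (succs f x).
Proof.
rewrite /succs /scl /=; case: (nexts _ _) => //=.
- by move=> l r; case: (f _).
- by move=> p l r; rewrite !mulrA.
Qed.

Lemma succs_hsh f g h x : (forall v, g v = f (h ++ v)) ->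
  succs f (hsh h x) = map (hsh h) (succs g x).
Proof.
move=> Eg; rewrite /succs /hsh /=; case: (nexts _ _) => //=.
- by move=> u d; rewrite rcons_cat.
- by move=> l r; rewrite Eg; case: (f _) => /=; rewrite rcons_cat.
- by move=> p l r; rewrite !rcons_cat.
Qed.

Lemma succs_agree f f' x : (isND x -> f (es_hist x) = f' (es_hist x)) -> succs f x = succs f' x.
Proof. by rewrite /succs /isND; case: (nexts _ _) => // l r ->. Qed.

Lemma ev_shift Z f g h w n x : (forall v, g v = f (h ++ v)) ->
  ev Z f (h ++ w) n x = ev Z g w n x.
Proof.
move=> Eg; elim: n w x => [|n IH] w x //=; case: ifP => // _.
congr (1 + _).
have -> : ES x.1 x.2 1 (h ++ w) = hsh h (ES x.1 x.2 1 w) by [].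
rewrite (succs_hsh _ Eg) big_map; apply: eq_sum_In => z _.
by rewrite /hsh /= IH.
Qed.

Lemma ev_agree Z f f' w n x :
  (forall i y, (i < n)%N -> stepn f i (ES x.1 x.2 1 w) y -> isND y ->
     f (es_hist y) = f' (es_hist y)) ->
  ev Z f w n x = ev Z f' w n x.
Proof.
elim: n w x => [|n IH] w x H //=; case: ifP => // _.
congr (1 + _).
rewrite -(succs_agree (f := f) (f' := f')); last by move=> Hn; apply: (H 0%N) => //.
apply: eq_sum_In => z Hz; congr (_ * _); apply: IH => i y Hi Hy Hn.
have -> : es_hist y = es_hist (scl (es_prob z) y) by [].
apply: (H i.+1) => //=.
exists z; split; first by apply/step_succs.
move: (stepn_scl (es_prob z) Hy); rewrite /scl /= mulr1.
by case: z {Hz Hy}.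
Qed.

Lemma isTerm_step f x y : step f x y -> isTerm (pst x) = false.
Proof. by move/step_iff; rewrite /tstep /isTerm /pst /=; case: (nexts _ _). Qed.

Lemma ev_gain f K x a w y n : 0 <= a -> stepn f K (ES x.1 x.2 a w) y ->
  ratr (es_prob y) * ev set0 f (es_hist y) n (pst y) <= ratr a * ev set0 f w (K + n) x.
Proof.
elim: K x a w => [|K IH] x a w Ha /=; first by move=> <-; case: x.
move=> [u [H1 H2]].
have Ht := isTerm_step H1.
have : List.In u (succs f (scl a (ES x.1 x.2 1 w))).
  by rewrite /scl /= mulr1; apply/step_succs.
rewrite succs_scl => /List.in_map_iff [z [Ez Hz]]; subst u.
have Hz0 : 0 <= es_prob z by rewrite -(ler0q R); exact: wpos Hz.
have := IH (pst z) (a * es_prob z) (es_hist z) (mulr_ge0 Ha Hz0).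
rewrite /scl in H2; move/(_ H2) => {}IH.
apply: le_trans IH _.
have HT : isTerm x = false by move: Ht; rewrite /isTerm /pst /=.
rewrite in_set0 HT /=.
rewrite rmorphM -mulrA ler_wpM2l ?ler0q // -[X in X <= _]add0r lerD //.
exact: (@sum_ge_one _ _ (fun z => ratr (es_prob z) * ev set0 f (es_hist z) (K + n) (pst z)) z
  (fun y Hy => mulr_ge0 (wpos Hy) (ev_ge0 _ _ _ _ _)) Hz).
Qed.

Lemma ev_trunc Z f w d x :
  (forall y, stepn f d (ES x.1 x.2 1 w) y -> (pst y \in Z) || isTerm (pst y)) ->
  forall n, ev Z f w n x <= ev Z f w d x.
Proof.
elim: d w x => [|d IH] w x H n.
  have Hx : (x \in Z) || isTerm x by move: (H _ erefl); case: x {H}.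
  by case: n => //= n; rewrite Hx.
case: n => [|n]; first exact: ev_ge0.
rewrite /=; case: ifP => // _.
rewrite lerD2l; apply: ler_sum_In => z Hz; apply: ler_wpM2l; first exact: wpos Hz.
apply: IH => y Hy.
have := H (scl (es_prob z) y); rewrite /pst /scl /=; apply.
exists z; split; first by apply/step_succs.
move: (stepn_scl (es_prob z) Hy); rewrite /scl /= mulr1.
by case: z {Hz Hy}.
Qed.

Lemma nat_min (P : nat -> Prop) : (exists n, P n) -> exists n, P n /\ forall m, (m < n)%N -> ~ P m.
Proof.
move=> [n Hn]; apply: contrapT => Hno.
have : forall k m, (m <= k)%N -> ~ P m.
  elim=> [|k IH] m Hm.
    have -> : m = 0%N by lia.
    move=> H0; apply: Hno; exists 0%N; split => // m' Hm'; lia.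
  have [Hmk|->] : (m <= k)%N \/ m = k.+1 by lia.
    exact: IH.
  move=> Hk; apply: Hno; exists k.+1; split => // m' Hm'; apply: IH; lia.
by move/(_ n n (leqnn n)).
Qed.

Lemma ev_surv Z f w n x B : 0 <= B -> B + 1 < ev Z f w n x ->
  exists L y, B < ev Z f w L x /\ stepn f L (ES x.1 x.2 1 w) y /\
    ~~ ((pst y \in Z) || isTerm (pst y)).
Proof.
move=> HB Hev.
set S := fun d => exists y, stepn f d (ES x.1 x.2 1 w) y /\ ~~ ((pst y \in Z) || isTerm (pst y)).
have [Hall|Hnot] := pselect (forall d, S d).
  have [y [Hy1 Hy2]] := Hall n; exists n, y; split => //.
  by apply: lt_trans Hev; rewrite ltrDl.
have Hex : exists d, ~ S d by apply/existsNP.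
have [d0 [Hd0 Hmin]] := nat_min Hex.
have Htr : forall y, stepn f d0 (ES x.1 x.2 1 w) y -> (pst y \in Z) || isTerm (pst y).
  move=> y Hy; apply: contrapT => Hc; apply: Hd0; exists y; split => //.
  by apply/negP.
case: d0 Hd0 Hmin Htr => [|d'] Hd0 Hmin Htr.
  have := ev_trunc Htr n; rewrite /= => Hle.
  have : B + 1 < 0 by exact: lt_le_trans Hev Hle.
  by rewrite ltNge addr_ge0.
have [y [Hy1 Hy2]] : S d' by apply: contrapT; apply: Hmin.
exists d', y; split => //.
have H1 := ev_trunc Htr n; have H2 := ev_inc1 Z f w d' x.
have : B + 1 < ev Z f w d' x + 1 := lt_le_trans Hev (le_trans H1 H2).
by rewrite ltrD2r.
Qed.

Arguments pst : simpl never.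
Arguments isTerm : simpl never.

Fixpoint front (f : scheduler) (k : nat) (y : exstate) : seq exstate :=
  match k with
  | 0 => [:: y]
  | k'.+1 => if isTerm (pst y) then [:: y] else flatten (map (front f k') (succs f y))
  end.

Lemma In_flatten (T U : Type) (g : T -> seq U) (s : seq T) z t :
  List.In z s -> List.In t (g z) -> List.In t (flatten (map g s)).
Proof.
elim: s => [|a s IH] //= [->|Hz] Ht.
- elim: (g z) Ht => [|b l IHl] //= [->|Ht]; [by left|right; exact: IHl].
- elim: (g a) => [|b l IHl] //=; first exact: IH.
  by right.
Qed.

Lemma front_T f n y t k : stepn f n y t -> (n <= k)%N -> isTerm (pst t) -> List.In t (front f k y).
Proof.
elim: n y k => [|n IH] y k /=.
  move=> <-; case: k => [|k] Hk Ht; first by left.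
  change (List.In y (if isTerm (pst y) then [:: y] else flatten (map (front f k) (succs f y)))).
  by rewrite Ht; left.
move=> [z [H1 H2]] Hk Ht; case: k Hk => [|k] // Hk.
change (List.In t (if isTerm (pst y) then [:: y] else flatten (map (front f k) (succs f y)))).
rewrite (isTerm_step H1); apply: (In_flatten (z := z)); first by apply/step_succs.
exact: IH.
Qed.

Lemma front_sum f k y :
  \sum_(t <- front f k y) ratr (es_prob t) = ratr (es_prob y) :> R.
Proof.
elim: k y => [|k IH] y /=; first by rewrite big_seq1.
case: ifP => Ht; first by rewrite big_seq1.
rewrite big_flatten big_map /= -(sum_weights f Ht).
by apply: eq_sum_In => z _; rewrite IH.
Qed.

Lemma front_pos f k y t : 0 < es_prob y -> List.In t (front f k y) -> 0 < es_prob t.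
Proof.
elim: k y => [|k IH] y /= Hy; first by case=> // <-.
case: ifP => _; first by case=> // <-.
elim: (succs f y) (@succs_pos f y) => [|a s IHs] //= Hs.
move=> Hin.
have : List.In t (front f k a) \/ List.In t (flatten (map (front f k) s)).
  elim: (front f k a) Hin => [|b l IHl] /=; first by right.
  by case=> [->|H]; [left; left|case: (IHl H) => H'; [left; right|right]].
case=> H.
- by apply: (IH a) => //; apply: Hs => //; left.
- by apply: IHs => // z Hz Hz'; apply: Hs => //; right.
Qed.

Definition alive f k y : R :=
  \sum_(t <- front f k y) (if isTerm (pst t) then 0 else ratr (es_prob t)).

Lemma alive_ev f n x a w :
  \sum_(k < n) alive f k (ES x.1 x.2 a w) = ratr a * ev set0 f w n x.
Proof.
elim: n x a w => [|n IH] x a w; first by rewrite big_ord0 mulr0.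
rewrite big_ord_recl /=.
have -> : (x \in set0) = false by rewrite in_set0.
have Hx : isTerm (pst (ES x.1 x.2 a w)) = isTerm x by [].
case: ifP => /= Ht.
  have H0 : forall k, alive f k (ES x.1 x.2 a w) = 0.
    by case=> [|k]; rewrite /alive /= ?Hx ?Ht /= big_seq1 /= ?Hx ?Ht.
  rewrite mulr0 H0 add0r; apply: big1 => i _; exact: H0.
rewrite /alive /= Hx Ht big_seq1 /= Hx Ht.
rewrite mulrDr mulr1; congr (_ + _).
have Es : succs f (ES x.1 x.2 a w) = map (scl a) (succs f (ES x.1 x.2 1 w)).
  by rewrite -succs_scl /scl /= mulr1.
rewrite Es.
transitivity (\sum_(i < n) \sum_(z <- succs f (ES x.1 x.2 1 w)) alive f i (scl a z)).
  by apply: eq_bigr => i _; rewrite big_flatten /= !big_map add0n.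
rewrite exchange_big /= mulr_sumr; apply: eq_sum_In => z _.
have -> : scl a z = ES (pst z).1 (pst z).2 (a * es_prob z) (es_hist z) by [].
by rewrite IH rmorphM mulrA.
Qed.

Lemma In_mem (T : eqType) (x : T) (s : seq T) : List.In x s -> x \in s.
Proof. elim: s => [|a s IH] //= [->|H]; rewrite in_cons ?eqxx //; by rewrite IH ?orbT. Qed.

Lemma mem_In (T : eqType) (x : T) (s : seq T) : x \in s -> List.In x s.
Proof.
elim: s => [|a s IH] //=; rewrite in_cons => /orP[/eqP ->|H]; first by left.
by right; exact: IH.
Qed.

Lemma sum_undup_le (T : eqType) (s : seq T) (F : T -> R) :
  (forall x, x \in s -> 0 <= F x) -> \sum_(x <- undup s) F x <= \sum_(x <- s) F x.
Proof.
elim: s => [|a s IH] H //=.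
have H' : forall x, x \in s -> 0 <= F x by move=> x Hx; apply: H; rewrite in_cons Hx orbT.
case: ifP => Ha; rewrite !big_cons.
- rewrite -[X in X <= _]add0r lerD //; [apply: H; exact: mem_head | exact: IH].
- by rewrite lerD2l IH.
Qed.

Lemma T_le_sub s f k t : T_le s f k t -> List.In t (front f k (init s)) /\ isTerm (pst t).
Proof.
move=> [Ht [n [/andP[_ Hn] Hs]]].
have HT : isTerm (pst t) by apply/isTermE.
split => //; exact: front_T Hs Hn HT.
Qed.

Lemma term_ge s f k : alive f k (init s) <= 1 - \sum_(t \in T_le s f k) Prob t.
Proof.
set L := front f k (init s).
have Hsum : \sum_(t <- L) ratr (es_prob t) = 1 :> R by rewrite front_sum rmorph1.
have Hpos : forall t, List.In t L -> 0 <= ratr (es_prob t) :> R.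
  by move=> t Ht; rewrite ler0q; apply: ltW; apply: (front_pos _ Ht).
set H := fun t : exstate => if isTerm (pst t) then ratr (es_prob t) else 0 : R.
have Hal : alive f k (init s) = 1 - \sum_(t <- L) H t.
  rewrite -Hsum /alive -/L /H -sumrB; apply: eq_sum_In => t _.
  by case: ifP; rewrite ?subrr ?subr0.
rewrite Hal lerD2l lerN2.
set G := fun t : exstate => if t \in T_le s f k then Prob t else 0.
rewrite (eq_fsbigr G); last by move=> t Ht; rewrite /G Ht.
rewrite (fsbig_widen _ [set` undup L]); last 2 first.
- by move=> t /T_le_sub [Ht _]; rewrite /= mem_undup; apply: In_mem.
- by move=> t [_ Ht]; rewrite /G /=; case: ifP => // /set_mem.
rewrite -fsbig_seq ?undup_uniq //.
apply: (@le_trans _ _ (\sum_(t <- undup L) H t)).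
  apply: ler_sum_In => t Ht; rewrite /G /H; case: ifP => Hin.
    by have [_ ->] := T_le_sub (set_mem Hin).
  case: ifP => // _; apply: Hpos; apply: mem_In; rewrite -mem_undup; exact: In_mem.
apply: sum_undup_le => t Ht; rewrite /H; case: ifP => // _; apply: Hpos; exact: mem_In.
Qed.

Lemma alive_ge0 f k y : 0 < es_prob y -> 0 <= alive f k y.
Proof.
move=> Hy; apply: sum_ge0l => t Ht; case: ifP => // _.
by rewrite ler0q; apply: ltW; apply: (front_pos Hy Ht).
Qed.

Lemma ExpRuntime_ge s f n : ((ev set0 f [::] n s)%:E <= ExpRuntime s f)%E.
Proof.
rewrite /ExpRuntime.
have Hnn : forall k, (0 <= k)%N -> true -> (0 <= (1 - \sum_(t \in T_le s f k) Prob t)%:E)%E.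
  move=> k _ _; rewrite lee_fin; apply: le_trans (term_ge s f k).
  by apply: alive_ge0; rewrite /init /=.
apply: le_trans (nneseries_lim_ge n Hnn).
rewrite sumEFin lee_fin big_mkord.
have -> : ev set0 f [::] n s = \sum_(k < n) alive f k (init s).
  by rewrite /init alive_ev rmorph1 mul1r; case: s {Hnn}.
by apply: ler_sum => k _; apply: term_ge.
Qed.

Lemma PAST_bound P : PAST P -> forall f, exists B : R, forall n, ev set0 f [::] n (P, eta0) <= B.
Proof.
move=> HP f; have Hf := HP f.
have H0 : (0 <= ExpRuntime (P, eta0) f)%E.
  by apply: le_trans (ExpRuntime_ge _ f 0).
exists (fine (ExpRuntime (P, eta0) f)) => n.
rewrite -lee_fin fineK; first exact: ExpRuntime_ge.
by rewrite ge0_fin_numE.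
Qed.

Definition psucc (x y : pstate) : Prop :=
  match nexts x.1 x.2 with
  | TTerm => False
  | TDet u => y = u
  | TDeg u _ => y = u
  | TND l r => y = l \/ y = r
  | TPr _ l r => y = l \/ y = r
  end.

Inductive rstar : pstate -> pstate -> Prop :=
| rs_refl x : rstar x x
| rs_step x y z : psucc x y -> rstar y z -> rstar x z.

Definition bounded (Z : set pstate) (u : pstate) : Prop :=
  exists B : R, forall f n, ev Z f [::] n u <= B.

Definition Phi (Z : set pstate) : set pstate :=
  [set x | forall u, rstar x u -> bounded Z u].

Definition Z0 : set pstate := [set x | x.1 = Skip].

Inductive tower : set pstate -> Prop :=
| tw0 : tower Z0
| twS X : tower X -> tower (Phi X)
| twU (F : set pstate -> Prop) : (forall X, F X -> tower X) ->
    tower [set x | Z0 x \/ exists X, F X /\ X x].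

Definition sub (A B : set pstate) : Prop := forall x, A x -> B x.
Definition fc (X : set pstate) : Prop := forall x y, X x -> psucc x y -> X y.

Lemma set_ext (A B : set pstate) : sub A B -> sub B A -> A = B.
Proof. move=> H1 H2; apply/funext => x; apply/propext; split; [exact: H1|exact: H2]. Qed.

Lemma ev_inZ (Z : set pstate) f w n u : Z u -> ev Z f w n u = 0.
Proof. by move=> H; case: n => //= n; have -> : u \in Z by rewrite inE. Qed.

Lemma Phi_infl X : fc X -> sub X (Phi X).
Proof.
move=> Hfc x Hx u Hu; exists 0 => f n; rewrite ev_inZ //.
by elim: Hu Hx => // a b c Hab _ IH Ha; apply: IH; exact: Hfc Ha Hab.
Qed.

Lemma Phi_fc X : fc (Phi X).
Proof. by move=> x y Hx Hxy u Hu; apply: Hx; exact: rs_step Hxy Hu. Qed.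

Lemma Z0_fc : fc Z0.
Proof. by move=> [P e] y H; have E : P = Skip := H; rewrite /psucc /= E. Qed.

Lemma tower_fc X : tower X -> fc X.
Proof.
elim=> [|Y _ _|F _ IH]; [exact: Z0_fc|exact: Phi_fc|].
move=> x y [Hx|[Y [HY Hx]]] Hxy; first by left; exact: Z0_fc Hx Hxy.
by right; exists Y; split => //; exact: IH HY x y Hx Hxy.
Qed.

Lemma tower_Z0 X : tower X -> sub Z0 X.
Proof.
elim=> [|Y HY IH|F _ _]; first by [].
- by move=> x Hx; apply: (Phi_infl (tower_fc HY)); exact: IH.
- by move=> x Hx; left.
Qed.

Lemma tower_infl X : tower X -> sub X (Phi X).
Proof. by move=> H; apply: Phi_infl; exact: tower_fc. Qed.

Definition extreme (X : set pstate) : Prop :=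
  forall Y, tower Y -> sub Y X -> Y <> X -> sub (Phi Y) X.

Lemma M_all X : tower X -> extreme X -> forall Y, tower Y -> sub Y X \/ sub (Phi X) Y.
Proof.
move=> HX HE Y0 HY0; elim: HY0 => [|Y HY IH|F HF IH].
- by left; exact: tower_Z0.
- case: IH => [HYX|HXY].
  + have [E|NE] := pselect (Y = X).
      by right; rewrite E.
    by left; exact: HE.
  + by right => x Hx; apply: tower_infl HY _ (HXY x Hx).
- have [Hall|Hn] := pselect (forall Y, F Y -> sub Y X).
    left => x /= [Hx|[Y [HY Hx]]]; [exact: tower_Z0 Hx|exact: Hall HY x Hx].
  have [Y HY] : exists Y, ~ (F Y -> sub Y X) by apply/existsNP.
  have HFY : F Y by apply: contrapT => H; apply: HY => H'; exfalso; exact: H H'.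
  have HnY : ~ sub Y X by move=> H; apply: HY.
  case: (IH Y HFY) => // H; right => x Hx; right; exists Y; split => //; exact: H.
Qed.

Lemma all_extreme : forall X, tower X -> extreme X.
Proof.
move=> X0 HX0; elim: HX0 => [|X HX IH|F HF IH].
- move=> Y HY HYZ HNE; exfalso; apply: HNE; apply: set_ext => //; exact: tower_Z0.
- move=> Y HY HYX HNE.
  case: (M_all HX IH HY) => [HYX'|HXY].
  + have [E|NE] := pselect (Y = X); first by rewrite E.
    by move=> x Hx; apply: tower_infl HX _ (IH Y HY HYX' NE x Hx).
  + by exfalso; apply: HNE; apply: set_ext.
- set U := [set x | Z0 x \/ exists X, F X /\ X x].
  move=> Y HY HYU HNE.
  have [X [HFX HnX]] : exists X, F X /\ ~ sub (Phi X) Y.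
    apply: contrapT => Hno; apply: HNE; apply: set_ext => // x [Hx|[X [HX Hx]]].
      exact: tower_Z0 HY x Hx.
    have : sub (Phi X) Y by apply: contrapT => H; apply: Hno; exists X.
    by apply; apply: tower_infl (HF X HX) _ Hx.
  have HYX : sub Y X by case: (M_all (HF X HFX) (IH X HFX) HY) => // H; exfalso; exact: HnX H.
  have [E|NE] := pselect (Y = X).
  + rewrite E; case: (M_all (HF X HFX) (IH X HFX) (twU HF)) => [HUX|//].
    exfalso; apply: HNE; apply: set_ext => // x Hx; rewrite E; exact: HUX.
  + move=> x Hx; right; exists X; split => //; exact: IH X HFX Y HY HYX NE x Hx.
Qed.

Lemma tower_chain X Y : tower X -> tower Y -> sub X Y \/ sub Y X.
Proof.
move=> HX HY; case: (M_all HX (all_extreme HX) HY) => H; first by right.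
by left => x Hx; apply: H; exact: tower_infl HX _ Hx.
Qed.

Definition ltT (A B : set pstate) : Prop := tower A /\ sub A B /\ ~ sub B A.

Lemma tower_acc : forall X, tower X -> Acc ltT X.
Proof.
move=> X0 HX0; elim: HX0 => [|X HX IH|F HF IH].
- by constructor => Y [HY [H1 H2]]; exfalso; apply: H2; exact: tower_Z0.
- constructor => Y [HY [H1 H2]].
  case: (M_all HX (all_extreme HX) HY) => [HYX|HXY]; last by exfalso; apply: H2.
  have [HXY|HnXY] := pselect (sub X Y).
    have E : X = Y by apply: set_ext.
    rewrite -E; exact: IH.
  exact: (Acc_inv IH (conj HY (conj HYX HnXY))).
- constructor => Y [HY [H1 H2]].
  have [X [HFX HnX]] : exists X, F X /\ ~ sub (Phi X) Y.
    apply: contrapT => Hno; apply: H2 => x [Hx|[X [HX Hx]]].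
      exact: tower_Z0 HY x Hx.
    have : sub (Phi X) Y by apply: contrapT => H; apply: Hno; exists X.
    by apply; apply: tower_infl (HF X HX) _ Hx.
  have HYX : sub Y X by case: (M_all (HF X HFX) (all_extreme (HF X HFX)) HY) => // H; exfalso; exact: HnX H.
  have [HXY|HnXY] := pselect (sub X Y).
    have E : X = Y by apply: set_ext.
    rewrite -E; exact: IH X HFX.
  exact: (Acc_inv (IH X HFX) (conj HY (conj HYX HnXY))).
Qed.

Definition O := {X : set pstate | tower X}.
Definition ltO (a b : O) : Prop := sub (sval a) (sval b) /\ ~ sub (sval b) (sval a).

Lemma ltO_wf : well_founded ltO.
Proof.
suff H : forall X, Acc ltT X -> forall a : O, sval a = X -> Acc ltO a.
  by move=> a; apply: H (tower_acc (svalP a)) a erefl.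
move=> X; elim=> {}X _ IH a Ea; constructor => b [H1 H2].
apply: (IH (sval b)) => //; rewrite -Ea; split; first exact: (svalP b).
by split.
Qed.

Lemma O_eq (a b : O) : sub (sval a) (sval b) -> sub (sval b) (sval a) -> a = b.
Proof.
case: a b => [A HA] [B HB] /= H1 H2; have E : A = B by apply: set_ext.
subst B; by rewrite (Prop_irrelevance HA HB).
Qed.

Lemma O_wo : well_order ltO.
Proof.
split; first exact: ltO_wf.
- move=> a b c [H1 H2] [H3 H4]; split; first by move=> x Hx; apply: H3; apply: H1.
  by move=> H; apply: H4 => x Hx; apply: H1; apply: H.
- move=> a b; case: (tower_chain (svalP a) (svalP b)) => H.
  + have [H'|H'] := pselect (sub (sval b) (sval a)); first by right; left; exact: O_eq.
    by left.
  + have [H'|H'] := pselect (sub (sval a) (sval b)); first by right; left; exact: O_eq.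
    by right; right.
Qed.

Definition O0 : O := exist _ Z0 tw0.

Lemma wf_min (T : Type) (r : T -> T -> Prop) : well_founded r ->
  forall P : T -> Prop, (exists x, P x) -> exists x, P x /\ forall y, r y x -> ~ P y.
Proof.
move=> Hwf P [x Hx]; apply: contrapT => Hno; move: x Hx.
apply: (well_founded_induction Hwf (fun x => ~ P x)) => x IH Hx; apply: Hno.
exists x; split => // y Hy; exact: IH.
Qed.

Definition Uinf : set pstate := [set x | exists X : O, sval X x].

Definition g (s : pstate) : O :=
  match pselect (exists X : O, sval X s) with
  | left H => proj1_sig (cid (wf_min ltO_wf (P := fun X : O => sval X s) H))
  | right _ => O0
  end.

Lemma g_prop s : Uinf s -> sval (g s) s /\ forall Y : O, sval Y s -> sub (sval (g s)) (sval Y).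
Proof.
rewrite /g; case: pselect => // H _.
case: (cid _) => m [Hm Hmin] /=; split => // Y HY.
case: (tower_chain (svalP m) (svalP Y)) => // HYm.
have [H'|H'] := pselect (sub (sval m) (sval Y)) => //.
by exfalso; apply: (Hmin Y) => //; split.
Qed.

Lemma ex_Phi : forall X, tower X -> forall s, X s -> ~ Z0 s ->
  exists Y, tower Y /\ ~ Y s /\ Phi Y s.
Proof.
move=> X0 HX0; elim: HX0 => [|X HX IH|F HF IH] s Hs HZ.
- by [].
- have [HXs|HnXs] := pselect (X s); first exact: IH.
  by exists X.
- case: Hs => [Hs|[X [HFX HXs]]]; first by [].
  exact: IH HFX s HXs HZ.
Qed.

Definition Utop : set pstate := [set x | Z0 x \/ exists X, tower X /\ X x].

Lemma tower_Utop : tower Utop.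
Proof. exact: (twU (F := tower)). Qed.

Lemma Uinf_Utop x : Uinf x <-> Utop x.
Proof.
split; first by move=> [[X HX] Hx]; right; exists X.
case=> [Hx|[X [HX Hx]]]; first by exists O0.
by exists (exist _ X HX).
Qed.

Lemma Phi_Utop : sub (Phi Utop) Utop.
Proof. by move=> x Hx; right; exists (Phi Utop); split => //; apply: twS; exact: tower_Utop. Qed.

Lemma path_lemma t u : rstar t u -> forall (F : scheduler) a w, 0 < a ->
  exists F1 k b w1, (forall v, ~ pre w v -> F1 v = F v) /\
    stepn F1 k (ES t.1 t.2 a w) (ES u.1 u.2 b w1) /\ 0 < b /\ pre w w1.
Proof.
elim=> [x|x y z Hxy _ IH] F a w Ha.
  by exists F, 0%N, a, w; split => //; split => //; split => //; exact: pre_refl.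
have Hext : forall w' (F0 F1 : scheduler), pre w w' -> (forall v, ~ pre w' v -> F1 v = F0 v) ->
   (forall v, ~ pre w v -> F1 v = F0 v).
  by move=> w' F0 F1 Hw H v Hv; apply: H => H'; apply: Hv; exact: pre_trans Hw H'.
move: Hxy; rewrite /psucc; case E: (nexts x.1 x.2) => [|u'|u' d|l r|p l r] //.
- move=> Ey; rewrite Ey in IH; have [F1 [k [b [w1 [H1 [H2 [H3 H4]]]]]]] := IH F a w Ha.
  exists F1, k.+1, b, w1; split => //; split => //=.
  exists (ES u'.1 u'.2 a w); split => //; apply/step_iff; by rewrite /tstep /= E.
- move=> Ey; rewrite Ey in IH; have [F1 [k [b [w1 [H1 [H2 [H3 H4]]]]]]] := IH F a (rcons w d) Ha.
  exists F1, k.+1, b, w1; split; first exact: (Hext _ _ _ (pre_rcons w d) H1).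
  split; last by split => //; exact: pre_trans (pre_rcons w d) H4.
  exists (ES u'.1 u'.2 a (rcons w d)); split => //; apply/step_iff; by rewrite /tstep /= E.
- move=> Hy.
  set c := if pselect (y = l) then NL else NR.
  set F0 := fun v => if pselect (v = w) then c else F v.
  set dd := if pselect (y = l) then Ln else Rn.
  have [F1 [k [b [w1 [H1 [H2 [H3 H4]]]]]]] := IH F0 a (rcons w dd) Ha.
  have HF1w : F1 w = c.
    rewrite H1; first by rewrite /F0; case: pselect.
    exact: pre_rcons_not.
  exists F1, k.+1, b, w1; split.
    move=> v Hv; rewrite H1; first by rewrite /F0; case: pselect => // Ev; exfalso; apply: Hv; rewrite Ev; exact: pre_refl.
    by move=> H; apply: Hv; exact: pre_trans (pre_rcons w dd) H.
  split; last by split => //; exact: pre_trans (pre_rcons w dd) H4.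
  exists (ES y.1 y.2 a (rcons w dd)); split => //.
  apply/step_iff; rewrite /tstep /= E HF1w /c /dd.
  case: pselect => [Ey|Hn] /=; first by rewrite Ey.
  by case: Hy => // Ey; rewrite Ey.
- move=> Hy; have /andP[Hp0 Hp1] := nexts_Pr E.
  set dd := if pselect (y = l) then Lp else Rp.
  set a' := if pselect (y = l) then a * p else a * (1 - p).
  have Ha' : 0 < a' by rewrite /a'; case: pselect => ? /=; apply: mulr_gt0 => //; rewrite subr_gt0.
  have [F1 [k [b [w1 [H1 [H2 [H3 H4]]]]]]] := IH F a' (rcons w dd) Ha'.
  exists F1, k.+1, b, w1; split; first exact: (Hext _ _ _ (pre_rcons w dd) H1).
  split; last by split => //; exact: pre_trans (pre_rcons w dd) H4.
  exists (ES y.1 y.2 a' (rcons w dd)); split => //.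
  apply/step_iff; rewrite /tstep /= E /a' /dd.
  case: pselect => [Ey|Hn] /=; first by rewrite Ey; left.
  by case: Hy => // Ey; rewrite Ey; right.
Qed.

Definition Inv (s0 : pstate) (st : scheduler * exstate * nat) : Prop :=
  stepn st.1.1 st.2 (init s0) st.1.2 /\ ~ Utop (pst st.1.2) /\ 0 < es_prob st.1.2.

Lemma KF x : ~ Utop x -> exists u, rstar x u /\ ~ bounded Utop u.
Proof.
move=> Hx; have : ~ Phi Utop x by move=> H; apply: Hx; exact: Phi_Utop.
move=> H; apply: contrapT => Hno; apply: H => u Hu; apply: contrapT => Hb; apply: Hno.
by exists u.
Qed.

Lemma phase s0 (j : nat) F x tau : Inv s0 (F, x, tau) ->
  exists F' x' tau' N', Inv s0 (F', x', tau') /\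
    (forall v, ~ pre (es_hist x) v -> F' v = F v) /\
    pre (es_hist x) (es_hist x') /\ j%:R <= ev set0 F' [::] N' s0 /\ (N' <= tau')%N.
Proof.
case=> /= [Hx [HD Hpos]].
have [[uP uV] [Hru Hnb]] := KF HD.
have [F1 [k [b [w1 [HF1 [Hk [Hb Hw1]]]]]]] := @path_lemma _ _ Hru F (es_prob x) (es_hist x) Hpos.
have Ex : ES (pst x).1 (pst x).2 (es_prob x) (es_hist x) = x by clear; case: x.
rewrite Ex /= in Hk.
have Hx1 : stepn F1 tau (init s0) x := stepn_agree Hx (fun v Hv => esym (HF1 v Hv)).
have Hpath1 : stepn F1 (tau + k) (init s0) (ES uP uV b w1) by apply/stepn_add; exists x.
have Hrb : 0 < ratr b :> R by rewrite ltr0q.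
set B' : R := j%:R / ratr b.
have HB' : 0 <= B' by apply: divr_ge0 => //; exact: ltW.
have [f [n Hn]] : exists f n, B' + 1 < ev Utop f [::] n (uP, uV).
  apply: contrapT => Hno; apply: Hnb; exists (B' + 1) => f n; rewrite leNgt; apply/negP => H.
  by apply: Hno; exists f, n.
have [L [y [HL [Hy Hyn]]]] := ev_surv HB' Hn.
set F2 : scheduler := fun v => if pselect (pre w1 v) then f (drop (size w1) v) else F1 v.
have HF2a : forall v, F2 (w1 ++ v) = f v.
  move=> v; rewrite /F2; case: pselect => [?|H] /=; first by rewrite drop_size_cat.
  by exfalso; apply: H; exists v.
have HF2b : forall v, ~ pre w1 v -> F2 v = F1 v by move=> v Hv; rewrite /F2; case: pselect.
have Hpath2 : stepn F2 (tau + k) (init s0) (ES uP uV b w1) :=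
  stepn_agree Hpath1 (fun v Hv => esym (HF2b v Hv)).
have Hy2 : stepn F2 L (ES uP uV b w1) (hsh w1 (scl b y)).
  have := stepn_hsh (g := F2) (h := w1) HF2a (stepn_scl b Hy).
  by rewrite /hsh /scl /= mulr1 cats0.
have Hypos : 0 < es_prob y by apply: (stepn_pos _ Hy).
exists F2, (hsh w1 (scl b y)), (tau + k + L)%N, (tau + k + L)%N.
split.
  split; first by apply/stepn_add; exists (ES uP uV b w1).
  split; last by rewrite /= mulr_gt0.
  move=> HU; move: Hyn; rewrite negb_or => /andP[H _]; move/negP: H; apply.
  by rewrite inE.
split.
  move=> v Hv; rewrite HF2b; first exact: HF1.
  by move=> H; apply: Hv; exact: pre_trans Hw1 H.
split; first by apply: pre_trans Hw1 _; exists (es_hist y).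
split; last exact: leqnn.
have G := @ev_gain F2 (tau + k) s0 1 [::] (ES uP uV b w1) L ler01 Hpath2; rewrite rmorph1 mul1r /= in G.
apply: le_trans G.
have -> : (j%:R : R) = ratr b * B' by rewrite /B' mulrC divfK //; apply: lt0r_neq0.
apply: ler_wpM2l; first exact: ltW.
apply: le_trans (ltW HL) _.
rewrite -(@ev_shift Utop F2 f w1 [::]); last by move=> v; rewrite HF2a.
rewrite cats0; exact: ev_anti.
Qed.

Lemma ND_notDet y : isND y -> isDet y -> False.
Proof. by rewrite /isND /isDet; case: (nexts _ _). Qed.

Lemma coverage P : PAST P -> forall s, Reach (P, eta0) s -> Utop s.
Proof.
move=> HP [sP sV] Hs; apply: contrapT => HnU.
set s0 := (P, eta0).
have [f0 [a0 [w0 [n0 [_ Hn0]]]]] := Hs.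
have Inv0 : Inv s0 (f0, ES sP sV a0 w0, n0).
  split => //; split => //; apply: (stepn_pos _ Hn0); by rewrite /init.
pose IS := {st | Inv s0 st}.
pose Q (j : nat) (st : IS) (p : IS * nat) :=
  [/\ forall v, ~ pre (es_hist (sval st).1.2) v -> (sval p.1).1.1 v = (sval st).1.1 v,
      pre (es_hist (sval st).1.2) (es_hist (sval p.1).1.2),
      j%:R <= ev set0 (sval p.1).1.1 [::] p.2 s0 & (p.2 <= (sval p.1).2)%N].
have step_ex : forall j (st : IS), exists p, Q j st p.
  move=> j [[[F x] tau] Hst].
  have [F' [x' [tau' [N' [HI [H1 [H2 [H3 H4]]]]]]]] := phase j Hst.
  by exists (exist _ (F', x', tau') HI, N').
pose pick j st := sval (cid (step_ex j st)).
have Hpick : forall j st, Q j st (pick j st) by move=> j st; rewrite /pick; case: cid.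
pose seqS := fix sq (j : nat) : IS :=
  match j with 0 => exist _ (f0, ES sP sV a0 w0, n0) Inv0 | j'.+1 => (pick j' (sq j')).1 end.
pose Fj j := (sval (seqS j)).1.1.
pose wj j := es_hist (sval (seqS j)).1.2.
pose Nj j := (pick j (seqS j)).2.
have P1 : forall j v, ~ pre (wj j) v -> Fj j.+1 v = Fj j v.
  by move=> j v Hv; have [H _ _ _] := Hpick j (seqS j); exact: H.
have P2 : forall j, pre (wj j) (wj j.+1).
  by move=> j; have [_ H _ _] := Hpick j (seqS j); exact: H.
have P3 : forall j, j%:R <= ev set0 (Fj j.+1) [::] (Nj j) s0.
  by move=> j; have [_ _ H _] := Hpick j (seqS j); exact: H.
have P4 : forall j, (Nj j <= (sval (seqS j.+1)).2)%N.
  by move=> j; have [_ _ _ H] := Hpick j (seqS j); exact: H.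
have P5 : forall j, stepn (Fj j) (sval (seqS j)).2 (init s0) (sval (seqS j)).1.2.
  by move=> j; have [H _] := svalP (seqS j).
have chain : forall m d, pre (wj m) (wj (m + d)%N).
  move=> m; elim=> [|d IH]; first by rewrite addn0; exact: pre_refl.
  by rewrite addnS; exact: pre_trans IH (P2 _).
have stable : forall m d v, ~ pre (wj m) v -> Fj (m + d)%N v = Fj m v.
  move=> m; elim=> [|d IH] v Hv; first by rewrite addn0.
  rewrite addnS P1; first exact: IH.
  by move=> H; apply: Hv; exact: pre_trans (chain m d) H.
pose Finf : scheduler := fun v =>
  match pselect (exists m, ~ pre (wj m) v) with
  | left H => Fj (sval (cid H)) v
  | right _ => NL
  end.
have Finf_eq : forall m v, ~ pre (wj m) v -> Finf v = Fj m v.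
  move=> m v Hv; rewrite /Finf; case: pselect => [H|H]; last by exfalso; apply: H; exists m.
  case: cid => m' Hm' /=.
  have [Hle|Hle] := leqP m m'.
    by rewrite -(subnKC Hle) stable.
  by rewrite -(subnKC (ltnW Hle)) stable.
have Hev : forall j, ev set0 (Fj j.+1) [::] (Nj j) s0 = ev set0 Finf [::] (Nj j) s0.
  move=> j; apply: ev_agree => i y Hi Hy Hnd.
  rewrite (Finf_eq j.+1) //.
  move=> Hpre; apply: (ND_notDet Hnd).
  apply: (stepn_lateDet Hy (P5 j.+1)) => //.
  exact: leq_trans Hi (P4 j).
have [B HB] := PAST_bound HP Finf.
set j := (Num.truncn B).+1.
have := P3 j; rewrite Hev => H.
have := le_trans H (HB (Nj j)).
by rewrite leNgt truncnS_gt.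
Qed.

Lemma nexts_Deg P eta u d : nexts P eta = TDeg u d -> d = Lp \/ d = Rp.
Proof.
elim: P eta u d.
- by [].
- by [].
- move=> P1 IH1 P2 _ eta u d.
  have [E|HP1] : P1 = Skip \/ P1 <> Skip by destruct P1; [left|right..].
    by rewrite E.
  rewrite nexts_seq //; move: (IH1 eta); case: (nexts P1 eta) => //= u' d' H [_ <-].
  exact: H.
- move=> P1 _ q P2 _ eta u d /=.
  case: ifP => _; first by case=> _ <-; right.
  case: ifP => _; first by case=> _ <-; left.
  by [].
- by [].
- by move=> b Q _ eta u d /=; case: ifP.
Qed.

Lemma pair_eta (x : pstate) : (x.1, x.2) = x. Proof. by case: x. Qed.

Lemma inv_det t s' : (forall f, step f (init t) (ES s'.1 s'.2 1 [::])) ->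
  nexts t.1 t.2 = TDet s'.
Proof.
move/(_ (fun _ => NL)); rewrite step_iff /tstep /init /=.
case: (nexts t.1 t.2) => //.
- by move=> u [E1 E2]; rewrite -(pair_eta s') E1 E2 pair_eta.
- by move=> p l r [H|H]; inversion H.
Qed.

Lemma inv_nd t sl sr :
  (forall f, step f (init t) (ES sl.1 sl.2 1 [:: Ln]) \/ step f (init t) (ES sr.1 sr.2 1 [:: Rn])) ->
  nexts t.1 t.2 = TND sl sr.
Proof.
move=> HH; move: (HH (fun _ => NL)) (HH (fun _ => NR)); rewrite !step_iff /tstep /init /=.
case E: (nexts t.1 t.2) => [|u|u d|l r|p l r] //.
- by move=> [[]|[]].
- by move=> [H|H]; inversion H.
- by have := nexts_Deg E; case=> ->; move=> [H|H]; inversion H.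
- case=> [[E1 E2]|H]; last by inversion H.
  case=> [H|[E3 E4]]; first by inversion H.
  by rewrite -(pair_eta sl) -(pair_eta sr) E1 E2 E3 E4 !pair_eta.
- by move=> [[H|H]|[H|H]]; inversion H.
Qed.

Lemma inv_pr t p sl sr :
  (forall f, step f (init t) (ES sl.1 sl.2 p [:: Lp]) /\ step f (init t) (ES sr.1 sr.2 (1 - p) [:: Rp])) ->
  nexts t.1 t.2 = TPr p sl sr.
Proof.
move/(_ (fun _ => NL)); rewrite !step_iff /tstep /init /=.
case E: (nexts t.1 t.2) => [|u|u d|l r|q l r] //.
- by case=> [[]].
- by case=> H _; inversion H.
- by case=> H1 H2; rewrite -H1 in H2; inversion H2.
- by case=> H _; inversion H.
- case=> [[[E1 E2 E3]|H] [H'|[E4 E5 E6]]].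
  + by inversion H'.
  + by rewrite -(pair_eta sl) -(pair_eta sr) E1 E2 E4 E5 !pair_eta E3 mul1r.
  + by inversion H.
  + by inversion H.
Qed.

Lemma step_psucc f x y : step f x y -> psucc (pst x) (pst y).
Proof.
move/step_iff; rewrite /tstep /psucc /pst /=; case: (nexts _ _) => //.
- by move=> u ->; rewrite pair_eta.
- by move=> u d ->; rewrite pair_eta.
- by move=> l r; case: (f _) => ->; rewrite pair_eta; [left|right].
- by move=> p l r [->|->]; rewrite pair_eta; [left|right].
Qed.

Lemma stepn_rstar f n x y : stepn f n x y -> rstar (pst x) (pst y).
Proof.
elim: n x => [|n IH] x /=; first by move=> ->; exact: rs_refl.
move=> [u [H1 H2]]; exact: rs_step (step_psucc H1) (IH _ H2).
Qed.

Lemma Reach_rstar s t : Reach s t -> rstar s t.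
Proof.
move=> [f [a [w [n [_ H]]]]]; have := stepn_rstar H.
by rewrite /pst /init /= !pair_eta.
Qed.

Lemma Reach_step s t f y : Reach s t -> step f (init t) y -> Reach s (pst y).
Proof.
move=> [f0 [a0 [w0 [n [Hn H]]]]] Hy.
set f1 : scheduler := fun v => if pselect (pre w0 v) then f (drop (size w0) v) else f0 v.
have Hf1a : forall v, f1 (w0 ++ v) = f v.
  move=> v; rewrite /f1; case: pselect => [?|Hv] /=; first by rewrite drop_size_cat.
  by exfalso; apply: Hv; exists v.
have H1 : stepn f1 n (init s) (ES t.1 t.2 a0 w0).
  apply: (stepn_agree H) => v Hv; rewrite /f1; case: pselect => //.
have H2 : step f1 (ES t.1 t.2 a0 w0) (hsh w0 (scl a0 y)).
  have := step_hsh (g := f1) (h := w0) Hf1a (step_scl a0 Hy).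
  by rewrite /hsh /scl /init /= mulr1 cats0.
exists f1, (a0 * es_prob y), (w0 ++ es_hist y), n.+1; split => //.
have -> : n.+1 = (n + 1)%N by rewrite addn1.
apply/stepn_add; exists (ES t.1 t.2 a0 w0); split => //=.
by exists (hsh w0 (scl a0 y)).
Qed.

Definition Zs (s : pstate) : set pstate := [set u | ltO (g u) (g s)].
Definition Sset (s t : pstate) : set R := [set r | exists f n, r = ev (Zs s) f [::] n t].
Definition W s t : R := sup (Sset s t).
Definition hfun s t : R := if pselect (Reach s t /\ ~ ltO (g t) (g s)) then W s t else 0.

Lemma Uinf_fc x y : Uinf x -> psucc x y -> Uinf y.
Proof.
move=> /Uinf_Utop Hx Hxy; apply/Uinf_Utop; exact: (tower_fc tower_Utop) Hx Hxy.
Qed.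

Lemma Uinf_rstar x y : rstar x y -> Uinf x -> Uinf y.
Proof. elim=> // a b c Hab _ IH Ha; apply: IH; exact: Uinf_fc Ha Hab. Qed.

Lemma g_Z0 t : Uinf t -> Z0 t -> sub (sval (g t)) Z0.
Proof. by move=> Ht HZ; have [_ H] := g_prop Ht; apply: (H O0). Qed.

Lemma gterm s t : Uinf s -> ~ Z0 s -> Uinf t -> Z0 t -> ltO (g t) (g s).
Proof.
move=> Us HZs Ut HZt; split.
  move=> x Hx; apply: (tower_Z0 (svalP (g s))); exact: g_Z0 Hx.
move=> H; apply: HZs; apply: (g_Z0 Ut HZt); apply: H; exact: (g_prop Us).1.
Qed.

Lemma zero_iff s : Uinf s -> (is_zero ltO (g s) <-> Z0 s).
Proof.
move=> Us; split.
- move=> Hz; apply: contrapT => HZ; apply: (Hz O0); split.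
    exact: tower_Z0 (svalP (g s)).
  by move=> H; apply: HZ; apply: H; exact: (g_prop Us).1.
- move=> HZ y [H1 H2]; apply: H2 => x Hx; apply: (tower_Z0 (svalP y)).
  exact: (g_Z0 Us HZ).
Qed.

Lemma bounded_Zs s : Uinf s -> ~ Z0 s -> forall t, rstar s t -> bounded (Zs s) t.
Proof.
move=> Us HZ t Hst.
have [Hgs _] := g_prop Us.
have [Y [HY [HnY HPY]]] := ex_Phi (svalP (g s)) Hgs HZ.
have HYZ : forall u, Y u -> Zs s u.
  move=> u Hu; pose YO : O := exist _ Y HY.
  have Uu : Uinf u by exists YO.
  have Hgu : sub (sval (g u)) Y by exact: (g_prop Uu).2 YO Hu.
  have HYg : sub Y (sval (g s)).
    by case: (tower_chain (svalP (g s)) HY) => // H; exfalso; apply: HnY; apply: H.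
  split; first by move=> x Hx; apply: HYg; apply: Hgu.
  by move=> H; apply: HnY; apply: Hgu; apply: H.
have [B HB] := HPY t Hst; exists B => f n.
apply: le_trans (HB f n); exact: ev_anti.
Qed.

Lemma Sset_n0 s t : Sset s t !=set0.
Proof. by exists 0, (fun _ => NL), 0%N. Qed.

Lemma Sset_sup s t : bounded (Zs s) t -> has_sup (Sset s t).
Proof.
move=> [B HB]; split; first exact: Sset_n0.
by exists B => r [f [n ->]].
Qed.

Lemma W_ub s t f n : bounded (Zs s) t -> ev (Zs s) f [::] n t <= W s t.
Proof. by move=> Hb; apply: (sup_upper_bound (Sset_sup Hb)); exists f, n. Qed.

Lemma W_le_of s u c : (forall f n, ev (Zs s) f [::] n u + 1 <= c) -> W s u + 1 <= c.
Proof.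
move=> H; rewrite -lerBrDr; apply: ge_sup; first exact: Sset_n0.
by move=> r [f [n ->]]; rewrite lerBrDr.
Qed.

Lemma W_zero s u : Zs s u -> W s u = 0.
Proof.
move=> Hu; apply/eqP; rewrite eq_le; apply/andP; split.
  apply: ge_sup; first exact: Sset_n0.
  by move=> r [f [n ->]]; rewrite ev_inZ.
have Hb : bounded (Zs s) u by exists 0 => f n; rewrite ev_inZ.
by have := W_ub (fun _ => NL) 0%N Hb.
Qed.

Lemma notZ_bool (Z : set pstate) t : ~ Z t -> (t \in Z) = false.
Proof. by move=> H; apply/negbTE/negP; rewrite inE. Qed.

Lemma notTerm t : ~ Z0 t -> isTerm t = false.
Proof. by move=> H; apply/negbTE/negP => /isTermE. Qed.

Lemma evS (Z : set pstate) f n t : ~ Z t -> ~ Z0 t ->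
  ev Z f [::] n.+1 t = 1 + \sum_(z <- succs f (ES t.1 t.2 1 [::]))
            ratr (es_prob z) * ev Z f (es_hist z) n (pst z).
Proof. by move=> H1 H2; rewrite /= notZ_bool // notTerm. Qed.

Lemma W_ge1 s t : bounded (Zs s) t -> ~ Zs s t -> ~ Z0 t -> 1 <= W s t.
Proof.
move=> Hb H1 H2; apply: le_trans (W_ub (fun _ => NL) 1%N Hb).
rewrite evS //; rewrite -[X in X <= _]addr0 lerD2l.
by apply: sum_ge0l => z _; rewrite /= mulr0.
Qed.

Unset Implicit Arguments.

Theorem theorem5p12 (P : prog) :
  PAST P ->
  exists (O : Type) (lt : O -> O -> Prop),
    well_order lt /\
    exists (g : pstate -> O) (k : pstate -> ((pstate -> R) * R)%type),
      (forall s, Reach (P, eta0) s -> (is_zero lt (g s) <-> pterminal s)) /\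
      (forall s, Reach (P, eta0) s -> ~ pterminal s ->
         RSM_map (k s).1 (k s).2 /\
         (forall t : pstate,
            (k s).1 t = 0 <->
            ((Reach s t /\ lt (g t) (g s)) \/ ~ Reach s t))).
Proof.
move=> HP.
have Hcov : forall s, Reach (P, eta0) s -> Uinf s.
  by move=> s Hs; apply/Uinf_Utop; exact: coverage HP s Hs.
exists O, ltO; split; first exact: O_wo.
exists g, (fun s => (hfun s, 1)); split.
  by move=> s Hs; exact: zero_iff (Hcov s Hs).
move=> s Hs Hnt.
have Us := Hcov s Hs.
have HZ : ~ Z0 s := Hnt.
have Ut : forall t, Reach s t -> Uinf t.
  by move=> t Ht; exact: Uinf_rstar (Reach_rstar Ht) Us.
have Bt : forall t, Reach s t -> bounded (Zs s) t.
  by move=> t Ht; exact: bounded_Zs Us HZ t (Reach_rstar Ht).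
have Good : forall t, Reach s t -> ~ ltO (g t) (g s) -> ~ Z0 t.
  by move=> t Ht Hn HZt; apply: Hn; exact: gterm Us HZ (Ut t Ht) HZt.
have hW : forall t, Reach s t -> hfun s t = W s t.
  move=> t Ht; rewrite /hfun; case: pselect => // Hn.
  have Hlt : ltO (g t) (g s) by apply: contrapT => H; apply: Hn.
  by rewrite W_zero.
have Hpos : forall t, 0 < hfun s t -> Reach s t /\ ~ ltO (g t) (g s).
  by move=> t; rewrite /hfun; case: pselect => // ? /=; rewrite ltxx.
split; last first.
  move=> t /=; rewrite /hfun; case: pselect => [[HR Hn]|Hn] /=.
    split; last by case=> [[_ H]|H].
    move=> H0; have := W_ge1 (Bt t HR) Hn (Good t HR Hn); rewrite H0 ler10 //.
  split => // _; have [HR|HR] := pselect (Reach s t); last by right.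
  by left; split => //; apply: contrapT => H; apply: Hn.
split => /=.
- move=> t; rewrite /hfun; case: pselect => [[HR Hn]|?] //=.
  exact: le_trans ler01 (W_ge1 (Bt t HR) Hn (Good t HR Hn)).
- exact: ltr01.
- move=> t Ht; rewrite /hfun; case: pselect => [[HR Hn]|?] //=.
  by exfalso; exact: Good t HR Hn Ht.
move=> t /Hpos [HR Hn].
have HZt := Good t HR Hn.
have Hb := Bt t HR.
split.
- move=> s' Hs'; have E := inv_det Hs'.
  have HR' : Reach s s'.
    by have := Reach_step HR (Hs' (fun _ => NL)); rewrite /pst /= pair_eta.
  rewrite !hW //; apply: W_le_of => f n.
  have := W_ub f n.+1 Hb; rewrite evS // /succs /= E big_seq1 /= rmorph1 mul1r.
  by rewrite /pst /= pair_eta addrC.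
- move=> sl sr Hlr; have E := inv_nd Hlr.
  have HRl : Reach s sl.
    have := Reach_step (f := fun _ => NL) (y := ES sl.1 sl.2 1 [:: Ln]) HR; rewrite /pst /= pair_eta; apply.
    by apply/step_iff; rewrite /tstep /init /= E.
  have HRr : Reach s sr.
    have := Reach_step (f := fun _ => NR) (y := ES sr.1 sr.2 1 [:: Rn]) HR; rewrite /pst /= pair_eta; apply.
    by apply/step_iff; rewrite /tstep /init /= E.
  rewrite !hW // -lerBrDr ge_max; apply/andP; split; rewrite lerBrDr; apply: W_le_of => f n.
  + pose F : scheduler := fun v => match v with [::] => NL | _ :: v' => f v' end.
    have := W_ub F n.+1 Hb; rewrite evS // /succs /= E big_seq1 /= rmorph1 mul1r.
    have -> : ev (Zs s) F [:: Ln] n (pst (ES sl.1 sl.2 1 [:: Ln])) = ev (Zs s) f [::] n sl.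
      by rewrite -(@ev_shift (Zs s) F f [:: Ln] [::]) // /pst /= pair_eta.
    by rewrite addrC.
  + pose F : scheduler := fun v => match v with [::] => NR | _ :: v' => f v' end.
    have := W_ub F n.+1 Hb; rewrite evS // /succs /= E big_seq1 /= rmorph1 mul1r.
    have -> : ev (Zs s) F [:: Rn] n (pst (ES sr.1 sr.2 1 [:: Rn])) = ev (Zs s) f [::] n sr.
      by rewrite -(@ev_shift (Zs s) F f [:: Rn] [::]) // /pst /= pair_eta.
    by rewrite addrC.
- move=> p sl sr Hlr; have E := inv_pr Hlr.
  have /andP[Hp0 Hp1] := nexts_Pr E.
  have HRl : Reach s sl.
    have := Reach_step HR (Hlr (fun _ => NL)).1; rewrite /pst /= pair_eta; apply.
  have HRr : Reach s sr.
    have := Reach_step HR (Hlr (fun _ => NL)).2; rewrite /pst /= pair_eta; apply.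
  rewrite !hW //.
  set a : R := ratr p.
  have Ha0 : 0 < a by rewrite /a ltr0q.
  have Ha1 : a < 1 by rewrite /a -(rmorph1 (ratr : rat -> R)) ltr_rat.
  have Hkey : forall f1 n1 f2 n2, a * ev (Zs s) f1 [::] n1 sl + (1 - a) * ev (Zs s) f2 [::] n2 sr + 1 <= W s t.
    move=> f1 n1 f2 n2.
    pose F : scheduler := fun v => match v with Lp :: v' => f1 v' | Rp :: v' => f2 v' | _ => NL end.
    have := W_ub F (maxn n1 n2).+1 Hb; rewrite evS // /succs /= E big_cons big_seq1 /= !mul1r.
    have -> : ev (Zs s) F [:: Lp] (maxn n1 n2) (pst (ES sl.1 sl.2 p [:: Lp])) = ev (Zs s) f1 [::] (maxn n1 n2) sl.
      by rewrite -(@ev_shift (Zs s) F f1 [:: Lp] [::]) // /pst /= pair_eta.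
    have -> : ev (Zs s) F [:: Rp] (maxn n1 n2) (pst (ES sr.1 sr.2 (1 - p) [:: Rp])) = ev (Zs s) f2 [::] (maxn n1 n2) sr.
      by rewrite -(@ev_shift (Zs s) F f2 [:: Rp] [::]) // /pst /= pair_eta.
    rewrite rmorphB rmorph1 -/a => H.
    have M1 := ev_mono_le (Zs s) f1 [::] sl (leq_maxl n1 n2).
    have M2 := ev_mono_le (Zs s) f2 [::] sr (leq_maxr n1 n2).
    apply: le_trans H.
    have : a * ev (Zs s) f1 [::] n1 sl <= a * ev (Zs s) f1 [::] (maxn n1 n2) sl by apply: ler_wpM2l => //; exact: ltW.
    have : (1 - a) * ev (Zs s) f2 [::] n2 sr <= (1 - a) * ev (Zs s) f2 [::] (maxn n1 n2) sr.
      by apply: ler_wpM2l => //; rewrite subr_ge0; exact: ltW.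
    lra.
  set X := W s sl; set Y := W s sr.
  have HA : forall f2 n2, a * X + (1 - a) * ev (Zs s) f2 [::] n2 sr + 1 <= W s t.
    move=> f2 n2.
    have : X <= (W s t - 1 - (1 - a) * ev (Zs s) f2 [::] n2 sr) / a.
      apply: ge_sup; first exact: Sset_n0.
      move=> r [f1 [n1 ->]]; rewrite ler_pdivlMr //.
      have := Hkey f1 n1 f2 n2; lra.
    rewrite ler_pdivlMr // => H; lra.
  have : Y <= (W s t - 1 - a * X) / (1 - a).
    apply: ge_sup; first exact: Sset_n0.
    move=> r [f2 [n2 ->]]; rewrite ler_pdivlMr ?subr_gt0 //.
    have := HA f2 n2; lra.
  rewrite ler_pdivlMr ?subr_gt0 // => H; lra.
Qed.
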